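(* Let $\Sigma,\Gamma$ be finite alphabets, $k>0$, $\tau$ a tier on $\Sigma\times\Gamma^*$, and $f:\Sigma^*\to\Gamma^*$ a function that is $k$-TSSL on tier $\tau$. Then the SFST $T_f$ constructed from $f$ as described in the context is onward.
   Context: Strings: $\lambda$ is the empty string; $\rtimes$ is a boundary symbol not in any alphabet. For $m\ge0$, $\mathrm{suff}^m(x)$ is the string of the last $m$ symbols of $\rtimes^mx$. $\mathrm{lcp}(A)$ is the longest common prefix of a set of strings $A$. SFST: $\langle Q,\Sigma,\Gamma,q_0,\to,\sigma\rangle$ with states $Q$, start $q_0$, transition function $\to:Q\times\Sigma\to Q\times\Gamma^*$, final output $\sigma:Q\to\Gamma^*$; $q\xrightarrow{a:y}r$ means $\to(q,a)=\langle r,y\rangle$. The SFST is onward if for every state $q\ne q_0$, $\mathrm{lcp}(\{y\mid\exists a\in\Sigma\,\exists r.\ q\xrightarrow{a:y}r\}\cup\{\sigma(q)\})=\lambda$. For $f:\Sigma^*\to\Gamma^*$: $f^{\gets}(x):=\mathrm{lcp}(\{f(xy)\mid y\in\Sigma^*\})$; $f^{\to}_x$ is defined by $f(xy)=f^{\gets}(x)f^{\to}_x(y)$. A tier on a (possibly infinite) alphabet $A$ is a homomorphism $\tau:A^*\to A^*$ with $\tau(a)\in\{a,\lambda\}$ for each $a$; extended to $\rtimes$ by $\tau(\rtimes)=\rtimes$. Actions: $\mathbb{A}_f:=\{\langle x,y\rangle\in\Sigma\times\Gamma^*\mid\exists z.\ f^{\gets}(zx)=f^{\gets}(z)y\}$,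 written $x:y$. Run: if $|x|\le1$, $f^{\Leftarrow}(x):=x:f^{\gets}(x)$; if $x=yz$, $|y|\ge1$, $|z|=1$, $f^{\Leftarrow}(x):=f^{\Leftarrow}(y)(z:w)$ where $f^{\gets}(x)=f^{\gets}(y)w$. $f$ is $k$-TSSL on $\tau$ if $\mathrm{suff}^{k-1}(\tau(f^{\Leftarrow}(x)))=\mathrm{suff}^{k-1}(\tau(f^{\Leftarrow}(y)))$ implies $f^{\to}_x=f^{\to}_y$ for all $x,y\in\Sigma^*$. Construction of $T_f$: $Q:=(\{\rtimes\}\cup\mathbb{A}_f)^{k-1}$, $q_0:=\rtimes^{k-1}$. For $x\in\Sigma$, $\to(q_0,x):=\langle \mathrm{suff}^{k-1}(\tau(x:f^{\gets}(x))),f^{\gets}(x)\rangle$. For $q\in Q\setminus\{q_0\}$ and $w\in\Sigma$: take $x\in\Sigma^*$ with $\mathrm{suff}^{k-1}(\tau(f^{\Leftarrow}(x)))=q$ and let $w:y\in\mathbb{A}_f$ be such that $f^{\gets}(xw)=f^{\gets}(x)y$; set $\to(q,w):=\langle\mathrm{suff}^{k-1}(\tau(q(w:y))),y\rangle$ (by the TSSL property this does not depend on the choice of $x$). Final outputs: $\sigma(q_0):=f(\lambda)$, and for $q\ne q_0$, $\sigma(q):=f^{\to}_x(\lambda)$ where $\mathrm{suff}^{k-1}(\tau(f^{\Leftarrow}(x)))=q$. *)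

(* Defs.v *)
From mathcomp Require Import all_boot.
From Stdlib Require Import ClassicalEpsilon.

Set Implicit Arguments.
Unset Strict Implicit.
Unset Printing Implicit Defensive.

Section TSSL.
Variables (Sigma Gamma : finType).

Notation word := (seq Sigma).
Notation oword := (seq Gamma).

Definition is_lcp (A : oword -> Prop) (p : oword) : Prop :=
  (forall s, A s -> prefix p s) /\
  (forall p', (forall s, A s -> prefix p' s) -> prefix p' p).

(* lcp(A): the (unique) longest common prefix; [::] if none exists
   (it always exists for nonempty A). *)
Definition lcp (A : oword -> Prop) : oword :=
  epsilon (inhabits [::]) (is_lcp A).

Variable f : word -> oword.

Definition fleft (x : word) : oword := lcp (fun s => exists y, s = f (x ++ y)).

(* f^{->}_x(y), determined by f(xy) = f^{<-}(x) f^{->}_x(y) *)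
Definition fright (x : word) (y : word) : oword :=
  drop (size (fleft x)) (f (x ++ y)).

Definition action := (Sigma * oword)%type.

Definition actions_f (a : action) : Prop :=
  exists z, fleft (z ++ [:: a.1]) = fleft z ++ a.2.

(* The run f^{<=}(x).  runf pre s produces the actions for the letters of s,
   given that the already-read prefix is pre.  The first letter a gets
   the action a:f^{<-}(a); each later letter z after prefix y gets z:w with
   f^{<-}(yz) = f^{<-}(y) w. *)
Fixpoint runf (pre : word) (s : word) : seq action :=
  match s with
  | [::] => [::]
  | a :: s' =>
      (a, if pre is [::] then fleft [:: a]
          else drop (size (fleft pre)) (fleft (rcons pre a)))
      :: runf (rcons pre a) s'
  end.
Definition run (x : word) : seq action := runf [::] x.

Definition is_tier (tau : seq action -> seq action) : Prop :=
  (forall s t, tau (s ++ t) = tau s ++ tau t) /\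
  (forall a, tau [:: a] = [:: a] \/ tau [:: a] = [::]).

(* Strings over {rtimes} + actions: None is the boundary symbol rtimes *)
Definition bword := seq (option action).

Definition suffb (m : nat) (s : bword) : bword :=
  let t := nseq m None ++ s in drop (size t - m) t.
(* suff^m(x) = last m symbols of rtimes^m x *)
Definition suff (m : nat) (s : seq action) : bword := suffb m (map Some s).

Definition tau_ext (tau : seq action -> seq action) (s : bword) : bword :=
  flatten (map (fun o => match o with
                         | None => [:: None]
                         | Some a => map Some (tau [:: a]) end) s).

Definition is_TSSL (k : nat) (tau : seq action -> seq action) : Prop :=
  forall x y : word,
    suff k.-1 (tau (run x)) = suff k.-1 (tau (run y)) ->
    forall z, fright x z = fright y z.

Variables (k : nat) (tau : seq action -> seq action).

Definition state := bword.
Definition q0 : state := nseq k.-1 None.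

Definition realizes (q : state) (x : word) : Prop :=
  suff k.-1 (tau (run x)) = q.

Definition pick_x (q : state) : word := epsilon (inhabits [::]) (realizes q).

Definition Tf_trans (q : state) (w : Sigma) : state * oword :=
  if q == q0 then (suff k.-1 (tau [:: (w, fleft [:: w])]), fleft [:: w])
  else
    let x := pick_x q in
    let y := drop (size (fleft x)) (fleft (x ++ [:: w])) in
    (suffb k.-1 (tau_ext tau (rcons q (Some (w, y)))), y).

Definition Tf_final (q : state) : oword :=
  if q == q0 then f [::] else fright (pick_x q) [::].

(* The states of T_f at which the construction is defined:
   q0 and the states realized by some input string. *)
Definition Tf_state (q : state) : Prop := q = q0 \/ exists x, realizes q x.

End TSSL.

Definition onward (Sigma Gamma : finType) (S : eqType) (Q : S -> Prop) (s0 : S)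
  (trans : S -> Sigma -> S * seq Gamma) (final : S -> seq Gamma) : Prop :=
  forall q, Q q -> q <> s0 ->
    lcp (fun y => (exists (a : Sigma) (r : S), trans q a = (r, y)) \/ y = final q)
    = [::].

(* Main.v *)
Require Import Defs.
From mathcomp Require Import all_boot.
From Stdlib Require Import ClassicalEpsilon Classical.

Set Implicit Arguments.
Unset Strict Implicit.
Unset Printing Implicit Defensive.

Lemma lcp_exists (G : finType) (A : seq G -> Prop) s0 :
  A s0 -> exists p, is_lcp A p.
Proof.
move=> As0.
pose P n := forall s, A s -> prefix (take n s0) s.
have: forall b, exists n, n <= b /\ P n /\ forall m, m <= b -> P m -> m <= n.
  elim=> [|b [n [hn [Pn Hm]]]].
    exists 0; split=> //; split; first by move=> s _; rewrite take0 prefix0s.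
    by move=> m; rewrite leqn0 => /eqP->.
  case: (classic (P b.+1)) => Pb.
    by exists b.+1; split=> //; split=> // m hm _.
  exists n; split; first by apply: leqW.
  split=> // m; rewrite leq_eqVlt => /orP[/eqP->//|hm] Pm.
  exact: Hm.
move=> /(_ (size s0)) [n [hn [Pn Hm]]].
exists (take n s0); split=> // p' Hp'.
have pp := Hp' _ As0.
have hs : size p' <= size s0.
  by move: pp => /prefixP [t ->]; rewrite size_cat leq_addr.
have ep : take (size p') s0 = p' by move: pp; rewrite prefixE => /eqP.
have Pp : P (size p') by move=> s As; rewrite ep; exact: Hp'.
have le := Hm _ hs Pp.
by rewrite prefixE take_takel // ep.
Qed.

Lemma lcp_spec (G : finType) (A : seq G -> Prop) s0 :
  A s0 -> is_lcp A (lcp A).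
Proof.
move=> As0; rewrite /lcp; apply: epsilon_spec; exact: lcp_exists As0.
Qed.

Theorem corollary28 (Sigma Gamma : finType) (k : nat)
  (tau : seq (action Sigma Gamma) -> seq (action Sigma Gamma))
  (f : seq Sigma -> seq Gamma) :
  0 < k ->
  is_tier tau ->
  is_TSSL f k tau ->
  onward (Tf_state f k tau) (q0 Sigma Gamma k)
         (Tf_trans f k tau) (Tf_final f k tau).
Proof.
move=> _ _ _ q _ hq.
have hq' : (q == q0 Sigma Gamma k) = false by apply/negP => /eqP.
set A := (fun y => _ \/ _).
have hA : A (Tf_final f k tau q) by right.
have [H1 H2] := lcp_spec hA.
have Fx : forall z, is_lcp (fun s => exists y, s = f (z ++ y)) (fleft f z).
  by move=> z; apply: (@lcp_spec _ _ (f (z ++ [::]))); exists [::].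
case E: (lcp A) => [|c L'] //; exfalso.
rewrite E in H1.
set x := pick_x f k tau q.
have pc : forall y, A y -> prefix [:: c] y.
  by move=> y /H1 h; apply: (@catl_prefix _ _ _ L').
have Pfx : forall z y, prefix (fleft f z) (f (z ++ y)).
  by move=> z y; case: (Fx z) => h _; apply: h; exists y.
have claim : forall y, prefix (fleft f x ++ [:: c]) (f (x ++ y)).
  case=> [|w y'].
    have hf : A (fright f x [::]).
      by right; rewrite /Tf_final hq'.
    have := pc _ hf; rewrite /fright.
    have /prefixP [t ht] := Pfx x [::].
    rewrite ht drop_size_cat // => ct.
    by rewrite prefix_catr // eqxx.
  have pw : prefix (fleft f x) (fleft f (x ++ [:: w])).
    case: (Fx (x ++ [:: w])) => _; apply=> s [y ->].
    by rewrite -catA /=; apply: Pfx.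
  move: pw => /prefixP [d hd].
  have hdA : A d.
    left; exists w; eexists.
    rewrite /Tf_trans hq' /= -/x hd drop_size_cat //.
  have := pc _ hdA => cd.
  apply: (@prefix_trans _ (fleft f (x ++ [:: w]))).
    by rewrite hd prefix_catr // eqxx.
  by have := Pfx (x ++ [:: w]) y'; rewrite -catA.
case: (Fx x) => _ /(_ (fleft f x ++ [:: c])) h.
have: prefix (fleft f x ++ [:: c]) (fleft f x).
  by apply: h => s [y ->].
move=> /prefixP [t] /(congr1 size); rewrite !size_cat /=.
by move=> /eqP; rewrite -{1}(addn0 (size _)) -addnA eqn_add2l addSn.
Qed.
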